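(* Let $\boldsymbol{X}\in\mathbb{R}^{n\times d}$ have rows $\boldsymbol{x}_i$ with $\lVert\boldsymbol{x}_i\rVert_2\le\gamma$ for all $i$, let $\boldsymbol{W}_Q,\boldsymbol{W}_K\in\mathbb{R}^{d\times d_k}$, $\tau>0$, and define $\boldsymbol{P}_{ij}=-\lVert\boldsymbol{x}_i^T\boldsymbol{W}_Q-\boldsymbol{x}_j^T\boldsymbol{W}_K\rVert_2^2/\tau$ and $\boldsymbol{A}=\mathrm{softmax}(\boldsymbol{P})$. Then $\alpha:=\max_{i,j}\lvert\boldsymbol{P}_{ij}\rvert\le(\lVert\boldsymbol{W}_K\rVert_2+\lVert\boldsymbol{W}_Q\rVert_2)^2\gamma^2/\tau$, and consequently for every $\boldsymbol{W}_V\in\mathbb{R}^{d\times d}$, $$\lVert\mathrm{HC}[\boldsymbol{A}\boldsymbol{X}\boldsymbol{W}_V]\rVert_F\le\sqrt{\frac{ne^{2\alpha}}{e^{2\alpha}+n-1}}\,\lVert\boldsymbol{W}_V\rVert_2\lVert\mathrm{HC}[\boldsymbol{X}]\rVert_F .$$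
   Context: $\mathrm{softmax}$ is applied row-wise: $\mathrm{softmax}(\boldsymbol{P})_{ij}=e^{\boldsymbol{P}_{ij}}/\sum_t e^{\boldsymbol{P}_{it}}$. $\mathrm{HC}[\boldsymbol{X}]=(\boldsymbol{I}-\frac1n\boldsymbol{1}\boldsymbol{1}^T)\boldsymbol{X}$ with $\boldsymbol{1}$ the all-ones vector. $\lVert\cdot\rVert_F$ Frobenius norm, $\lVert\cdot\rVert_2$ spectral norm. *)

(* Defs.v *)
From HB Require Import structures.
From mathcomp Require Import all_boot all_order all_algebra.
From mathcomp Require Import classical_sets reals.
From mathcomp.analysis Require Import sequences exp.
Set Implicit Arguments. Unset Strict Implicit. Unset Printing Implicit Defensive.
Import Order.TTheory GRing.Theory Num.Theory.
Local Open Scope classical_set_scope.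
Local Open Scope ring_scope.

Definition vnorm (R : realType) (m : nat) (v : 'rV[R]_m) : R :=
  Num.sqrt (\sum_(j < m) v 0 j ^+ 2).

Definition frob (R : realType) (m n : nat) (A : 'M[R]_(m, n)) : R :=
  Num.sqrt (\sum_(i < m) \sum_(j < n) A i j ^+ 2).

Definition specnorm (R : realType) (m n : nat) (W : 'M[R]_(m, n)) : R :=
  sup [set vnorm (u *m W) | u in [set u : 'rV[R]_m | vnorm u <= 1]].

Definition softmax (R : realType) (m n : nat) (P : 'M[R]_(m, n)) : 'M[R]_(m, n) :=
  \matrix_(i, j) (expR (P i j) / \sum_(t < n) expR (P i t)).

Definition HC (R : realType) (n p : nat) (X : 'M[R]_(n, p)) : 'M[R]_(n, p) :=
  (1%:M - (n%:R)^-1 *: const_mx 1) *m X.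

Definition L2attn_logits (R : realType) (n d dk : nat) (X : 'M[R]_(n, d))
  (WQ WK : 'M[R]_(d, dk)) (tau : R) : 'M[R]_(n, n) :=
  \matrix_(i, j) (- (vnorm (row i X *m WQ - row j X *m WK)) ^+ 2 / tau).

(* max_{i,j} |P_ij| (0 for an empty matrix). *)
Definition maxabs (R : realType) (m n : nat) (P : 'M[R]_(m, n)) : R :=
  \big[Num.max/0]_(i < m) \big[Num.max/0]_(j < n) `|P i j|.

(* Main.v *)
Require Import Defs.
From HB Require Import structures.
From mathcomp Require Import all_boot all_order all_algebra.
From mathcomp Require Import classical_sets reals.
From mathcomp.analysis Require Import sequences exp.
From mathcomp Require Import ring lra.
Import Order.TTheory GRing.Theory Num.Theory.
Local Open Scope ring_scope.

Section Aux.
Variable R : realType.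

Lemma sq_sqrt_sum (m : nat) (F : 'I_m -> R) :
  Num.sqrt (\sum_i F i ^+ 2) ^+ 2 = \sum_i F i ^+ 2.
Proof. by rewrite sqr_sqrtr // sumr_ge0 // => i _; rewrite sqr_ge0. Qed.

Lemma sum_sq_eq0 (m : nat) (F : 'I_m -> R) :
  \sum_i F i ^+ 2 = 0 -> forall i, F i = 0.
Proof.
move=> H i; have := psumr_eq0P (P := xpredT) (F := fun i => F i ^+ 2).
by move=> /(_ (fun i _ => sqr_ge0 _) H i isT) /eqP; rewrite sqrf_eq0 => /eqP.
Qed.

Lemma cs_neg (m : nat) (a b : 'I_m -> R) :
  - \sum_i a i * b i <= Num.sqrt (\sum_i a i ^+ 2) * Num.sqrt (\sum_i b i ^+ 2).
Proof.
set A := \sum_i a i ^+ 2; set B := \sum_i b i ^+ 2.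
set sA := Num.sqrt A; set sB := Num.sqrt B.
have hA : sA ^+ 2 = A by exact: sq_sqrt_sum.
have hB : sB ^+ 2 = B by exact: sq_sqrt_sum.
have sA0 : 0 <= sA by exact: sqrtr_ge0.
have sB0 : 0 <= sB by exact: sqrtr_ge0.
have key : 0 <= sA * sB * (sA * sB + \sum_i a i * b i).
  have : 0 <= \sum_i (a i * sB + b i * sA) ^+ 2
    by apply: sumr_ge0 => i _; exact: sqr_ge0.
  have -> : \sum_i (a i * sB + b i * sA) ^+ 2 =
     sB ^+ 2 * A + 2 * (sA * sB) * \sum_i a i * b i + sA ^+ 2 * B.
    rewrite /A /B !mulr_sumr -!big_split /=; apply: eq_bigr => i _; ring.
  rewrite hA hB => H.
  have -> : sA * sB * (sA * sB + \sum_i a i * b i) =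
     (B * A + 2 * (sA * sB) * \sum_i a i * b i + A * B) / 2.
    by rewrite -hA -hB; field.
  by rewrite divr_ge0.
have [p0|] := ltP 0 (sA * sB).
  rewrite pmulr_rge0 // in key.
  lra.
rewrite le_eqVlt => /orP [/eqP p0|]; last first.
  by move=> /lt_le_trans/(_ (mulr_ge0 sA0 sB0)); rewrite ltxx.
have : (sA == 0) || (sB == 0) by rewrite -mulf_eq0 -p0.
move=> /orP [/eqP z|/eqP z].
- have A0 : A = 0 by rewrite -hA z expr0n.
  have az := @sum_sq_eq0 _ a A0.
  by rewrite big1 ?oppr0 ?mulr_ge0 // => i _; rewrite az mul0r.
- have B0 : B = 0 by rewrite -hB z expr0n.
  have bz := @sum_sq_eq0 _ b B0.
  by rewrite big1 ?oppr0 ?mulr_ge0 // => i _; rewrite bz mulr0.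
Qed.

Lemma vnorm_ge0 (m : nat) (v : 'rV[R]_m) : 0 <= vnorm v.
Proof. exact: sqrtr_ge0. Qed.

Lemma vnorm_sq (m : nat) (v : 'rV[R]_m) : vnorm v ^+ 2 = \sum_j v 0 j ^+ 2.
Proof. exact: sq_sqrt_sum. Qed.

Lemma vnorm_sub (m : nat) (a b : 'rV[R]_m) :
  vnorm (a - b) ^+ 2 <= (vnorm a + vnorm b) ^+ 2.
Proof.
rewrite vnorm_sq.
have -> : \sum_j (a - b) 0 j ^+ 2 =
   \sum_j a 0 j ^+ 2 - 2 * \sum_j a 0 j * b 0 j + \sum_j b 0 j ^+ 2.
  rewrite mulr_sumr -sumrN -!big_split /=; apply: eq_bigr => j _.
  rewrite !mxE; ring.
rewrite sqrrD -!vnorm_sq lerD2r.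
have := @cs_neg _ (fun j => a 0 j) (fun j => b 0 j); rewrite -/(vnorm a) -/(vnorm b).
lra.
Qed.

Lemma vnormZ (m : nat) (c : R) (v : 'rV[R]_m) : vnorm (c *: v) = `|c| * vnorm v.
Proof.
rewrite /vnorm -sqrtr_sqr -sqrtrM ?sqr_ge0 // mulr_sumr.
by congr Num.sqrt; apply: eq_bigr => j _; rewrite mxE exprMn.
Qed.

Lemma vnorm_eq0 (m : nat) (v : 'rV[R]_m) : vnorm v = 0 -> v = 0.
Proof.
move=> h; have : \sum_j v 0 j ^+ 2 = 0 by rewrite -vnorm_sq h expr0n.
move/sum_sq_eq0 => z; apply/rowP => j; rewrite mxE; exact: z.
Qed.

End Aux.

Section Spec.
Variable R : realType.
Local Open Scope classical_set_scope.

Lemma vnorm0 (m : nat) : vnorm (0 : 'rV[R]_m) = 0.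
Proof. by rewrite /vnorm big1 ?sqrtr0 // => j _; rewrite mxE expr0n. Qed.

Lemma spec_has_sup (m k : nat) (W : 'M[R]_(m, k)) :
  has_sup [set vnorm (u *m W) | u in [set u : 'rV[R]_m | vnorm u <= 1]].
Proof.
split.
  exists 0, 0; first by rewrite /= vnorm0.
  by rewrite mul0mx vnorm0.
exists (Num.sqrt (\sum_j (\sum_i `|W i j|) ^+ 2)).
move=> _ [u /= hu <-]; rewrite /vnorm ler_sqrt; last first.
  by apply: sumr_ge0 => j _; exact: sqr_ge0.
apply: ler_sum => j _.
have hu1 : forall i, `|u 0 i| <= 1.
  move=> i; have : u 0 i ^+ 2 <= 1.
    apply: le_trans (_ : vnorm u ^+ 2 <= 1).
      rewrite vnorm_sq (bigD1 i) //= lerDl; apply: sumr_ge0 => l _; exact: sqr_ge0.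
    by rewrite expr_le1 // vnorm_ge0.
  rewrite -[u 0 i ^+ 2]ger0_norm ?sqr_ge0 // normrX.
  have := normr_ge0 (u 0 i); set y := `|u 0 i|; nra.
rewrite -[_ ^+ 2]ger0_norm ?sqr_ge0 // normrX ler_sqr ?inE ?normr_ge0 //; last first.
  by apply: sumr_ge0 => i _; exact: normr_ge0.
rewrite mxE; apply: le_trans (ler_norm_sum _ _ _) _.
apply: ler_sum => i _; rewrite normrM; apply: ler_piMl => //; exact: normr_ge0.
Qed.

Lemma spec_ge0 (m k : nat) (W : 'M[R]_(m, k)) : 0 <= specnorm W.
Proof.
have := sup_upper_bound (@spec_has_sup _ _ W); apply.
by exists 0; rewrite /= ?vnorm0 // mul0mx vnorm0.
Qed.

Lemma spec_le (m k : nat) (W : 'M[R]_(m, k)) (u : 'rV[R]_m) :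
  vnorm (u *m W) <= specnorm W * vnorm u.
Proof.
have [z|nz] := eqVneq (vnorm u) 0.
  by rewrite z mulr0 (@vnorm_eq0 _ _ _ z) mul0mx vnorm0.
have pos : 0 < vnorm u by rewrite lt_neqAle eq_sym nz vnorm_ge0.
have := sup_upper_bound (@spec_has_sup _ _ W) (_ : _ (vnorm (((vnorm u)^-1 *: u) *m W))).
rewrite -scalemxAl vnormZ ger0_norm ?invr_ge0 ?vnorm_ge0 // => H.
rewrite -ler_pdivrMr // mulrC; apply: H.
exists ((vnorm u)^-1 *: u) => //=.
rewrite vnormZ ger0_norm ?invr_ge0 ?vnorm_ge0 // mulVf //.
by rewrite -scalemxAl vnormZ ger0_norm ?invr_ge0 ?vnorm_ge0.
Qed.

End Spec.

Section M.
Variable R : realType.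

Lemma jensen (m : nat) (a y : 'I_m -> R) : (forall j, 0 <= a j) ->
  \sum_j a j = 1 -> (\sum_j a j * y j) ^+ 2 <= \sum_j a j * y j ^+ 2.
Proof.
move=> a0 a1.
have E : forall M, \sum_j a j * (y j - M) ^+ 2 =
   \sum_j a j * y j ^+ 2 - 2 * M * \sum_j a j * y j + M ^+ 2 * \sum_j a j.
  move=> M; rewrite (mulr_sumr _ _ _ (2 * M)) (mulr_sumr _ _ _ (M ^+ 2)) -sumrN -!big_split /=.
  by apply: eq_bigr => j _; ring.
have := E (\sum_j a j * y j); rewrite a1.
have : 0 <= \sum_j a j * (y j - \sum_j a j * y j) ^+ 2.
  by apply: sumr_ge0 => j _; apply: mulr_ge0 => //; exact: sqr_ge0.
move: (\sum_j a j * (y j - _) ^+ 2) => S.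
move: (\sum_j a j * y j ^+ 2) (\sum_j a j * y j) => T U; lra.
Qed.

Lemma frob_stoch (n p : nat) (A : 'M[R]_n) (V : 'M[R]_(n, p)) (c : R) :
  (forall i j, 0 <= A i j) -> (forall i, \sum_j A i j = 1) ->
  (forall j, \sum_i A i j <= c) ->
  \sum_i \sum_k (A *m V) i k ^+ 2 <= c * \sum_j \sum_k V j k ^+ 2.
Proof.
move=> A0 A1 Ac.
apply: le_trans (_ : \sum_i \sum_k \sum_j A i j * V j k ^+ 2 <= _).
  apply: ler_sum => i _; apply: ler_sum => k _; rewrite mxE.
  exact: jensen.
rewrite exchange_big /= (exchange_big _ _ _ _ _ (fun j k => V j k ^+ 2)) /=.
rewrite mulr_sumr; apply: ler_sum => k _.
rewrite exchange_big /= mulr_sumr; apply: ler_sum => j _.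
by rewrite -mulr_suml ler_wpM2r ?sqr_ge0.
Qed.

Lemma mean_min (n : nat) (z : 'I_n -> R) (c : R) :
  \sum_i (z i - n%:R^-1 * \sum_l z l) ^+ 2 <= \sum_i (z i - c) ^+ 2.
Proof.
case: n z => [|n] z; first by rewrite !big_ord0.
set M := _ * _.
have hs : \sum_i (z i - M) = 0.
  rewrite sumrB sumr_const card_ord /M -(mulr_natr (n.+1%:R^-1 * _)) mulrAC mulVf ?mul1r ?subrr //.
  by rewrite pnatr_eq0.
have -> : \sum_i (z i - c) ^+ 2 =
   \sum_i (z i - M) ^+ 2 + 2 * (M - c) * \sum_i (z i - M) + \sum_(i < n.+1) (M - c) ^+ 2.
  rewrite mulr_sumr -!big_split /=; apply: eq_bigr => i _; ring.
rewrite hs mulr0 addr0 lerDl; apply: sumr_ge0 => i _; exact: sqr_ge0.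
Qed.

Lemma HCE (n p : nat) (Z : 'M[R]_(n, p)) i k :
  HC Z i k = Z i k - n%:R^-1 * \sum_l Z l k.
Proof.
rewrite /HC mulmxBl mul1mx -scalemxAl !mxE; congr (_ - _ * _).
by apply: eq_bigr => l _; rewrite mxE mul1r.
Qed.

Lemma frob_sq (m p : nat) (M : 'M[R]_(m, p)) :
  frob M ^+ 2 = \sum_i \sum_j M i j ^+ 2.
Proof.
rewrite sqr_sqrtr //; apply: sumr_ge0 => i _; apply: sumr_ge0 => j _.
exact: sqr_ge0.
Qed.

Lemma frob_ge0 (m p : nat) (M : 'M[R]_(m, p)) : 0 <= frob M.
Proof. exact: sqrtr_ge0. Qed.

Lemma frob_spec (m p q : nat) (Y : 'M[R]_(m, p)) (W : 'M[R]_(p, q)) :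
  \sum_i \sum_k (Y *m W) i k ^+ 2 <= specnorm W ^+ 2 * \sum_i \sum_k Y i k ^+ 2.
Proof.
rewrite mulr_sumr; apply: ler_sum => i _.
have e1 : forall (r : nat) (M : 'M[R]_(m, r)),
    \sum_k M i k ^+ 2 = vnorm (row i M) ^+ 2.
  by move=> r M; rewrite vnorm_sq; apply: eq_bigr => k _; rewrite mxE.
rewrite !e1 row_mul -exprMn ler_sqr ?inE ?vnorm_ge0 ?mulr_ge0 ?spec_ge0 ?vnorm_ge0 //.
- exact: spec_le.
- by rewrite qualifE; exact: vnorm_ge0.
- by rewrite qualifE; apply: mulr_ge0; [exact: spec_ge0|exact: vnorm_ge0].
Qed.

End M.

Theorem mainTheorem9 (R : realType) (n d dk : nat) (X : 'M[R]_(n, d))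
  (gamma : R) (WQ WK : 'M[R]_(d, dk)) (tau : R)
  (hX : forall i : 'I_n, vnorm (row i X) <= gamma) (htau : 0 < tau) :
  let P := L2attn_logits X WQ WK tau in
  let A := softmax P in
  let alpha := maxabs P in
  alpha <= (specnorm WK + specnorm WQ) ^+ 2 * gamma ^+ 2 / tau /\
  forall WV : 'M[R]_(d, d),
    frob (HC (A *m X *m WV)) <=
      Num.sqrt (n%:R * expR (2 * alpha) / (expR (2 * alpha) + n%:R - 1))
      * specnorm WV * frob (HC X).
Proof.
move=> P A alpha.
have hP : forall i j, `|P i j| <= alpha.
  move=> i j; apply: le_trans (le_bigmax 0 (fun i => \big[Num.max/0]_(j < n) `|P i j|) i).
  exact: (le_bigmax 0 (fun j => `|P i j|) j).
have al0 : 0 <= alpha.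
  rewrite /alpha /maxabs; apply: (big_ind (fun x => 0 <= x)) => //.
  - by move=> x y hx hy; rewrite le_max hx.
  - move=> i _; apply: (big_ind (fun x => 0 <= x)) => //.
    by move=> x y hx hy; rewrite le_max hx.
split.
  have sQ := @spec_ge0 _ _ _ WQ; have sK := @spec_ge0 _ _ _ WK.
  have b0 : 0 <= (specnorm WK + specnorm WQ) ^+ 2 * gamma ^+ 2 / tau.
    by apply: divr_ge0; [apply: mulr_ge0; exact: sqr_ge0|exact: ltW].
  apply: bigmax_le => // i _; apply: bigmax_le => // j _.
  have g0 : 0 <= gamma by apply: le_trans (hX i); exact: vnorm_ge0.
  rewrite /P mxE normrM normrN normrX ger0_norm ?vnorm_ge0 // normfV (gtr0_norm htau).
  rewrite ler_pM2r ?invr_gt0 //.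
  apply: le_trans (@vnorm_sub _ _ _ _) _.
  rewrite -exprMn ler_sqr; first last.
  - by rewrite qualifE; apply: mulr_ge0 => //; exact: addr_ge0.
  - by rewrite qualifE; apply: addr_ge0; exact: vnorm_ge0.
  rewrite mulrDl addrC; apply: lerD.
  - by apply: le_trans (@spec_le _ _ _ _ _) _; rewrite ler_wpM2l.
  - by apply: le_trans (@spec_le _ _ _ _ _) _; rewrite ler_wpM2l.
move=> WV.
set e := expR (2 * alpha).
have e1 : 1 <= e.
  apply: le_trans (_ : 1 <= 1 + 2 * alpha) (expR_ge1Dx _).
  by rewrite lerDl; apply: mulr_ge0.
have s0 := @spec_ge0 _ _ _ WV.
have [nz|npos] := posnP n.
  rewrite /frob big1 ?sqrtr0 ?mulr_ge0 ?sqrtr_ge0 //; last first.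
    by case=> i hi; exfalso; move: hi; rewrite nz.
have n1 : 1 <= n%:R :> R by rewrite ler1n.
have n0 : 0 <= n%:R :> R by exact: ler0n.
set D := e + n%:R - 1.
have D0 : 0 < D.
  rewrite /D; move: e1 n1; clearbody e; move: (n%:R : R) => a h1 h2. lra.
have Spos : forall i, 0 < \sum_t expR (P i t).
  move=> i; rewrite (bigD1 i) //=.
  have := expR_gt0 (P i i).
  have : 0 <= \sum_(t | t != i) expR (P i t).
    by apply: sumr_ge0 => t _; exact: expR_ge0.
  lra.
have AE : forall i j, A i j = expR (P i j) / \sum_t expR (P i t).
  by move=> i j; rewrite /A /softmax mxE.
have A0 : forall i j, 0 <= A i j.
  by move=> i j; rewrite AE divr_ge0 ?expR_ge0 // ltW.
have A1 : forall i, \sum_j A i j = 1.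
  move=> i; under eq_bigr do rewrite AE.
  by rewrite -mulr_suml mulfV // gt_eqF.
have bnd : forall i j, A i j <= e / D.
  move=> i j; rewrite AE ler_pdivrMr // mulrAC ler_pdivlMr //.
  rewrite (bigD1 j) //=.
  have h1 : \sum_(t < n | t != j) expR (P i j) <= e * \sum_(t < n | t != j) expR (P i t).
    rewrite mulr_sumr; apply: ler_sum => t _; rewrite /e -expRD ler_expR.
    have := hP i t; have := hP i j; rewrite !ler_norml; lra.
  have h2 : n%:R * expR (P i j) = expR (P i j) + \sum_(t < n | t != j) expR (P i j).
    have h3 : \sum_(t < n) expR (P i j) = expR (P i j) + \sum_(t < n | t != j) expR (P i j).
      by rewrite (bigD1 j).
    by rewrite -h3 sumr_const card_ord mulr_natl.
  rewrite /D.
  move: h1 h2; set x := expR (P i j); set T := \sum_(t < n | t != j) expR (P i t).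
  set U := \sum_(t < n | t != j) x; nra.
have Ac : forall j, \sum_i A i j <= n%:R * e / D.
  move=> j; apply: le_trans (ler_sum _ (fun i _ => bnd i j)) _.
  by rewrite sumr_const card_ord -mulrA mulr_natl.
have cm0 : 0 <= n%:R * e / D.
  by apply: divr_ge0; [apply: mulr_ge0; lra| exact: ltW].
set Y := HC X.
set c := fun k => n%:R^-1 * \sum_l (X *m WV) l k.
set Z := A *m X *m WV.
have ZE : forall i k, Z i k - c k = (A *m (Y *m WV)) i k.
  have AJ : A *m const_mx 1 = const_mx 1 :> 'M_n.
    apply/matrixP => i j; rewrite !mxE.
    under eq_bigr do rewrite [const_mx 1 _ _]mxE mulr1.
    exact: A1.
  move=> i k.
  rewrite mulmxA /Y /HC mulmxA mulmxBr mulmx1 -scalemxAr AJ mulmxBl mulmxBl.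
  rewrite -/Z -[_ *m X *m WV]mulmxA.
  set XW := X *m WV.
  rewrite /c -/XW !mxE mulr_sumr; congr (_ - _); apply: eq_bigr => l _.
  by rewrite [in RHS]mxE [const_mx _ _ _]mxE mulr1.
have key : frob (HC Z) ^+ 2 <= (n%:R * e / D) * specnorm WV ^+ 2 * frob Y ^+ 2.
  rewrite frob_sq.
  under eq_bigr do under eq_bigr do rewrite HCE.
  rewrite exchange_big /=.
  apply: le_trans (_ : \sum_k \sum_i (Z i k - c k) ^+ 2 <= _).
    apply: ler_sum => k _; exact: (@mean_min _ _ (fun i => Z i k)).
  under eq_bigr do under eq_bigr do rewrite ZE.
  rewrite exchange_big /=.
  apply: le_trans (@frob_stoch _ _ _ A (Y *m WV) _ A0 A1 Ac) _.
  rewrite -[_ * specnorm WV ^+ 2 * _]mulrA ler_wpM2l // frob_sq; exact: frob_spec.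
rewrite -ler_sqr; first last.
- by rewrite qualifE; apply: mulr_ge0; [apply: mulr_ge0 => //; exact: sqrtr_ge0|exact: frob_ge0].
- by rewrite qualifE; exact: frob_ge0.
by rewrite !exprMn [Num.sqrt (n%:R * e / D) ^+ 2]sqr_sqrtr.
Qed.
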